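(* Let $\mathcal{A}$, $D(\mathcal{A})$, $H(\mathcal{A})$, $H(\mathcal{A}^* )$ be as in the context, let $a,a',b,b'\in\mathbb{Z}_{\ge0}$ with $(-1)^{a+a'}=-1$, $(-1)^{b+b'}=1$, and let $\eta:D(\mathcal{A})\to H(\mathcal{A})\otimes H(\mathcal{A}^* )$ be the algebra homomorphism $$\eta(e_\alpha\otimes 1)=\sum_{\beta,\gamma}(-1)^{a|\beta|+b|\gamma|}\mu^{\beta\gamma}_\alpha e_\beta\otimes\tilde e_\gamma,\qquad \eta(1\otimes e^\alpha)=\sum_{\beta,\gamma}(-1)^{a'|\beta|+b'|\gamma|}m^\alpha_{\gamma\beta}e^\beta\otimes\tilde e^\gamma.$$ Let $R=\sum_\alpha(e_\alpha\otimes1)\otimes(1\otimes e^\alpha)\in D(\mathcal{A})\otimes D(\mathcal{A})$ be the universal $R$-matrix. Then, in $H(\mathcal{A})\otimes H(\mathcal{A}^* )\otimes H(\mathcal{A})\otimes H(\mathcal{A}^* )$ (tensor positions $1,2,3,4$), $$(\eta\otimes\eta)(R)=S''_{14}\,S_{13}\,\tilde S_{24}\,S'_{23},$$ where $S=\sum_\alpha(-1)^{|\alpha|}e_\alpha\otimes e^\alpha$, $\tilde S=\sum_\alpha\tilde e_\alpha\otimes\tilde e^\alpha$, $S'=\sum_\alpha(-1)^{(a+b'+1)|\alpha|}\tilde e_\alpha\otimes e^\alpha$, $S''=\sum_\alpha(-1)^{(a+b')|\alpha|}e_\alpha\otimes\tilde e^\alpha$, and $X_{ij}$ denotes $X$ placed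 in tensor positions $i,j$ with $1$ elsewhere.
   Context: Graded tensor products: $(a_1\otimes b_1)(a_2\otimes b_2)=(-1)^{|b_1||a_2|}a_1a_2\otimes b_1b_2$. $\mathcal{A}$ is a $\mathbb{Z}_2$-graded Hopf algebra over $\mathbb{C}$ with homogeneous basis $e_\alpha$ of degree $|\alpha|$, $e_\alpha e_\beta=\sum_\gamma m^\gamma_{\alpha\beta}e_\gamma$, $\Delta(e_\alpha)=\sum\mu^{\beta\gamma}_\alpha e_\beta\otimes e_\gamma$, antipode coefficients $\gamma(e_\alpha)=\sum\gamma_\alpha^\beta e_\beta$ with inverse $(\gamma^{-1})^\beta_\alpha$; $\mathcal{A}^*$ the dual Hopf algebra with dual basis $e^\alpha$. The Drinfeld double $D(\mathcal{A})$ is spanned by $e_\alpha\otimes e^\beta$ with relations $(e_\alpha\otimes1)(1\otimes e^\beta)=e_\alpha\otimes e^\beta$, $(e_\alpha\otimes1)(e_\beta\otimes1)=\sum m^\gamma_{\alpha\beta}e_\gamma\otimes1$, $(1\otimes e^\alpha)(1\otimes e^\beta)=\sum(-1)^{|\alpha||\beta|}\mu^{\alpha\beta}_\gamma 1\otimes e^\gamma$, $(1\otimes e^\alpha)(e_\beta\otimes1)=\sum(-1)^{|\mu|(|\sigma|+|\delta|)}m^\mu_{\nu\gamma}m^\alpha_{\mu\delta}\mu^{\epsilon\rho}_\beta\mu^{\sigma\nu}_\rho(\gamma^{-1})^\delta_\epsilon e_\sigma\otimes e^\gamma$. The Heisenberg double $H(\mathcal{A})$ is spanned by $e^\alpha\otimes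 e_\beta$ with product $(e^\alpha\otimes e_\beta)(e^\gamma\otimes e_\delta)=\sum(-1)^{|\beta||\gamma|+|\pi||\epsilon|+|\pi||\alpha|+|\epsilon|}m^\gamma_{\pi\epsilon}m^\tau_{\rho\delta}\mu^{\epsilon\rho}_\beta\mu^{\alpha\pi}_\sigma e^\sigma\otimes e_\tau$, with $e_\alpha=1\otimes e_\alpha$, $e^\alpha=e^\alpha\otimes1$. The Heisenberg double $H(\mathcal{A}^* )$ is spanned by $\tilde e_\alpha\otimes\tilde e^\beta$ with product $(\tilde e_\alpha\otimes\tilde e^\beta)(\tilde e_\gamma\otimes\tilde e^\delta)=\sum(-1)^{|\rho||\pi|+|\rho||\epsilon|+|\pi||\delta|}\mu^{\rho\epsilon}_\gamma\mu^{\pi\delta}_\tau m^\beta_{\epsilon\pi}m^\sigma_{\alpha\rho}\tilde e_\sigma\otimes\tilde e^\tau$, with $\tilde e_\alpha=\tilde e_\alpha\otimes1$, $\tilde e^\alpha=1\otimes\tilde e^\alpha$ of degree $|\alpha|$. *)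

(* Defs.v *)
From HB Require Import structures.
From mathcomp Require Import all_boot all_order all_algebra.
Set Implicit Arguments. Unset Strict Implicit. Unset Printing Implicit Defensive.
Import Order.TTheory GRing.Theory Num.Theory.
Local Open Scope ring_scope.

Definition sg {F : nzRingType} (n : nat) : F := (-1) ^+ n.
Definition dlt {F : nzRingType} {I : eqType} (i j : I) : F := (i == j)%:R.

(* A Z2-graded Hopf algebra given by structure constants w.r.t. a homogeneous
   basis (e_a)_{a : I}, |a| = deg a.
     m a b g  = m^g_{ab}        (e_a e_b = sum_g m^g_{ab} e_g)
     u g      = coefficient of e_g in the unit 1
     mu a b c = mu^{bc}_a       (Delta e_a = sum mu^{bc}_a e_b (x) e_c)
     eps a    = counit epsilon(e_a)
     gam a b  = gamma_a^b       (antipode: gamma(e_a) = sum_b gamma_a^b e_b)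
     gami a b = (gamma^{-1})_a^b                                            *)
Record graded_hopf (F : fieldType) (I : finType) (deg : I -> bool)
  (m : I -> I -> I -> F) (u : I -> F) (mu : I -> I -> I -> F) (eps : I -> F)
  (gam gami : I -> I -> F) : Prop := GradedHopf {
  gh_deg_m : forall a b g, m a b g != 0 -> deg g = deg a (+) deg b;
  gh_deg_mu : forall a b c, mu a b c != 0 -> deg a = deg b (+) deg c;
  gh_deg_u : forall g, u g != 0 -> deg g = false;
  gh_deg_eps : forall a, eps a != 0 -> deg a = false;
  gh_deg_gam : forall a b, gam a b != 0 -> deg b = deg a;
  gh_assoc : forall a b c g,
    \sum_d m a b d * m d c g = \sum_d m b c d * m a d g;
  gh_unitl : forall a b, \sum_g u g * m g a b = dlt a b;
  gh_unitr : forall a b, \sum_g u g * m a g b = dlt a b;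
  gh_coassoc : forall a x y z,
    \sum_d mu a d z * mu d x y = \sum_d mu a x d * mu d y z;
  gh_counitl : forall a c, \sum_b eps b * mu a b c = dlt a c;
  gh_counitr : forall a b, \sum_c eps c * mu a b c = dlt a b;
  (* Delta is an algebra map into the graded tensor product A (x) A *)
  gh_delta_mul : forall a b x y,
    \sum_g m a b g * mu g x y =
    \sum_a1 \sum_a2 \sum_b1 \sum_b2
      sg (deg a2 * deg b1)%N * mu a a1 a2 * mu b b1 b2 * m a1 b1 x * m a2 b2 y;
  gh_delta_unit : forall x y, \sum_g u g * mu g x y = u x * u y;
  gh_eps_mul : forall a b, \sum_g m a b g * eps g = eps a * eps b;
  gh_eps_unit : \sum_g u g * eps g = 1;
  (* antipode axioms: m (gamma (x) id) Delta = m (id (x) gamma) Delta = 1 eps *)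
  gh_antipodel : forall a g,
    \sum_b \sum_c \sum_d mu a b c * gam b d * m d c g = eps a * u g;
  gh_antipoder : forall a g,
    \sum_b \sum_c \sum_d mu a b c * gam c d * m b d g = eps a * u g;
  gh_gaminvl : forall a c, \sum_b gam a b * gami b c = dlt a c;
  gh_gaminvr : forall a c, \sum_b gami a b * gam b c = dlt a c
}.

Section Doubles.
Variables (F : fieldType) (I : finType) (deg : I -> bool)
  (m : I -> I -> I -> F) (u : I -> F) (mu : I -> I -> I -> F) (eps : I -> F).

(* Basis index of H(A) (pairs (a,b) <-> e^a (x) e_b) and of H(A-dual)
   (pairs (a,b) <-> ~e_a (x) ~e^b). *)
Definition B := (I * I)%type.
Definition bdeg (x : B) : nat := (deg x.1 + deg x.2)%N.

(* Structure constants of H(A): (e^al(x)e_be)(e^ga(x)e_de) = sum c x y z e^si(x)e_ta *)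
Definition HA_c (x y z : B) : F :=
  \sum_pi \sum_ep \sum_rho
    sg (deg x.2 * deg y.1 + deg pi * deg ep + deg pi * deg x.1 + deg ep)%N
    * m pi ep y.1 * m rho y.2 z.2 * mu x.2 ep rho * mu z.1 x.1 pi.

Definition HAs_c (x y z : B) : F :=
  \sum_rho \sum_ep \sum_pi
    sg (deg rho * deg pi + deg rho * deg ep + deg pi * deg y.2)%N
    * mu y.1 rho ep * mu z.2 pi y.2 * m ep pi x.2 * m x.1 rho z.1.

(* Elements of H(A), H(A-dual) as coefficient functions on B. *)
(* units: 1_{H(A)} = 1_{A-dual} (x) 1_A = eps (x) 1 ; 1_{H(A-dual)} = 1_A (x) 1_{A-dual} *)
Definition HA_one (k : B) : F := eps k.1 * u k.2.
Definition HAs_one (k : B) : F := u k.1 * eps k.2.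
(* e_al = 1 (x) e_al and e^al = e^al (x) 1 in H(A) *)
Definition HA_lo (al : I) (k : B) : F := eps k.1 * dlt k.2 al.
Definition HA_up (al : I) (k : B) : F := dlt k.1 al * u k.2.
(* ~e_al = ~e_al (x) 1 and ~e^al = 1 (x) ~e^al in H(A-dual) *)
Definition HAs_lo (al : I) (k : B) : F := dlt k.1 al * eps k.2.
Definition HAs_up (al : I) (k : B) : F := u k.1 * dlt k.2 al.

(* Elements of H(A) (x) H(A-dual) (x) H(A) (x) H(A-dual) as coefficient functions. *)
Definition T4 := B -> B -> B -> B -> F.

Definition tens4 (x1 x2 x3 x4 : B -> F) : T4 :=
  fun k1 k2 k3 k4 => x1 k1 * x2 k2 * x3 k3 * x4 k4.

(* Product in the graded tensor product algebra H(A)(x)H(A-dual)(x)H(A)(x)H(A-dual):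
   (x1(x)x2(x)x3(x)x4)(y1(x)y2(x)y3(x)y4)
     = (-1)^{sum_{p>q} |x_p||y_q|} x1y1 (x) x2y2 (x) x3y3 (x) x4y4. *)
Definition mul4 (X Y : T4) : T4 :=
  fun k1 k2 k3 k4 =>
    \sum_i1 \sum_i2 \sum_i3 \sum_i4 \sum_j1 \sum_j2 \sum_j3 \sum_j4
      X i1 i2 i3 i4 * Y j1 j2 j3 j4
      * sg (bdeg i2 * bdeg j1 + bdeg i3 * (bdeg j1 + bdeg j2)
            + bdeg i4 * (bdeg j1 + bdeg j2 + bdeg j3))%N
      * HA_c i1 j1 k1 * HAs_c i2 j2 k2 * HA_c i3 j3 k3 * HAs_c i4 j4 k4.

(* (eta (x) eta)(R) = sum_al eta(e_al (x) 1) (x) eta(1 (x) e^al), with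
   eta(e_al(x)1) = sum (-1)^{a|be|+b|ga|} mu^{be ga}_al e_be (x) ~e_ga,
   eta(1(x)e^al) = sum (-1)^{a'|be|+b'|ga|} m^al_{ga be} e^be (x) ~e^ga. *)
Definition etaR (a a' b b' : nat) : T4 :=
  fun k1 k2 k3 k4 =>
    \sum_al \sum_be \sum_ga \sum_be' \sum_ga'
      sg (a * deg be + b * deg ga)%N * mu al be ga
      * (sg (a' * deg be' + b' * deg ga')%N * m ga' be' al)
      * tens4 (HA_lo be) (HAs_lo ga) (HA_up be') (HAs_up ga') k1 k2 k3 k4.

Definition S13 : T4 := fun k1 k2 k3 k4 =>
  \sum_al sg (deg al) * tens4 (HA_lo al) HAs_one (HA_up al) HAs_one k1 k2 k3 k4.
Definition St24 : T4 := fun k1 k2 k3 k4 =>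
  \sum_al tens4 HA_one (HAs_lo al) HA_one (HAs_up al) k1 k2 k3 k4.
Definition Sp23 (a b' : nat) : T4 := fun k1 k2 k3 k4 =>
  \sum_al sg ((a + b' + 1) * deg al)%N
    * tens4 HA_one (HAs_lo al) (HA_up al) HAs_one k1 k2 k3 k4.
Definition Spp14 (a b' : nat) : T4 := fun k1 k2 k3 k4 =>
  \sum_al sg ((a + b') * deg al)%N
    * tens4 (HA_lo al) HAs_one HA_one (HAs_up al) k1 k2 k3 k4.

End Doubles.

(* Main.v *)
Require Import Defs.
From HB Require Import structures.
From mathcomp Require Import all_boot all_order all_algebra.
From mathcomp Require Import ring.
From Stdlib Require Import FunctionalExtensionality.
Set Implicit Arguments. Unset Strict Implicit. Unset Printing Implicit Defensive.
Import Order.TTheory GRing.Theory Num.Theory.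
Local Open Scope ring_scope.

Section Work.
Variables (F : fieldType) (I : finType) (deg : I -> bool)
  (m : I -> I -> I -> F) (u : I -> F) (mu : I -> I -> I -> F) (eps : I -> F)
  (gam gami : I -> I -> F).
Hypothesis HH : graded_hopf deg m u mu eps gam gami.

Lemma sumB (G : B I -> F) : \sum_(k : B I) G k = \sum_i \sum_j G (i, j).
Proof. by rewrite pair_big; apply: eq_bigr => -[]. Qed.

Lemma sw3 (f : I -> I -> I -> F) :
  \sum_a \sum_b \sum_c f a b c = \sum_c \sum_a \sum_b f a b c.
Proof. under eq_bigr => a _ do rewrite exchange_big. by rewrite exchange_big. Qed.

Lemma mulnF n : (n * false)%N = 0%N. Proof. by rewrite muln0. Qed.
Lemma mulFn n : (false * n)%N = 0%N. Proof. by []. Qed.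
Lemma mulnT n : (n * true)%N = n. Proof. by rewrite muln1. Qed.
Lemma mulTn n : (true * n)%N = n. Proof. by rewrite mul1n. Qed.

Lemma sgF : sg false = 1 :> F. Proof. by rewrite /sg expr0. Qed.
Lemma sg0 : sg 0 = 1 :> F. Proof. by rewrite /sg expr0. Qed.

Lemma addnF n : (n + false)%N = n. Proof. by rewrite addn0. Qed.
Lemma addFn n : (false + n)%N = n. Proof. by []. Qed.

Lemma eps_deg x : eps x != 0 -> deg x = false.
Proof. move=> h; exact: (gh_deg_eps HH h). Qed.
Lemma u_deg x : u x != 0 -> deg x = false.
Proof. move=> h; exact: (gh_deg_u HH h). Qed.

Lemma sum_dltl (G : I -> F) z : \sum_j dlt j z * G j = G z.
Proof.
rewrite (bigD1 z) //= /dlt eqxx mul1r big1 ?addr0 // => j /negbTE ->; by rewrite mul0r.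
Qed.
Lemma sum_dltr (G : I -> F) z : \sum_j dlt z j * G j = G z.
Proof.
rewrite (bigD1 z) //= /dlt eqxx mul1r big1 ?addr0 // => j; rewrite eq_sym => /negbTE ->; by rewrite mul0r.
Qed.
Lemma dltC (i j : I) : dlt i j = dlt j i :> F.
Proof. by rewrite /dlt eq_sym. Qed.

Lemma c_epsm p e : \sum_j eps j * m p e j = eps p * eps e.
Proof. rewrite -(gh_eps_mul HH); apply: eq_bigr => j _; exact: mulrC. Qed.
Lemma c_um_l r z : \sum_j u j * m j r z = dlt r z.
Proof. exact: (gh_unitl HH r z). Qed.
Lemma c_um_r r z : \sum_j u j * m r j z = dlt r z.
Proof. exact: (gh_unitr HH r z). Qed.
Lemma c_epsmu_l a c : \sum_j eps j * mu a j c = dlt a c.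
Proof. exact: (gh_counitl HH a c). Qed.
Lemma c_epsmu_r a b : \sum_j eps j * mu a b j = dlt a b.
Proof. exact: (gh_counitr HH a b). Qed.
Lemma c_umu x y : \sum_j u j * mu j x y = u x * u y.
Proof. exact: (gh_delta_unit HH x y). Qed.

Lemma HA_one_r i1 i2 z1 z2 :
  \sum_j1 \sum_j2 eps j1 * u j2 * HA_c deg m mu (i1, i2) (j1, j2) (z1, z2)
  = dlt i1 z1 * dlt i2 z2.
Proof.
rewrite /HA_c /=.
transitivity (\sum_j1 \sum_j2 \sum_pi \sum_ep \sum_rho
   (sg (deg pi * deg ep + deg pi * deg i1 + deg ep)%N * mu i2 ep rho * mu z1 i1 pi)
   * ((eps j1 * m pi ep j1) * (u j2 * m rho j2 z2))).
  apply: eq_bigr => j1 _; apply: eq_bigr => j2 _; rewrite mulr_sumr.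
  apply: eq_bigr => pi _; rewrite mulr_sumr; apply: eq_bigr => ep _; rewrite mulr_sumr.
  apply: eq_bigr => rho _.
  have [->|/eps_deg ->] := eqVneq (eps j1) 0; first by rewrite !(mul0r, mulr0).
  rewrite mulnF add0n; ring.
transitivity (\sum_pi \sum_ep \sum_rho (sg (deg pi * deg ep + deg pi * deg i1 + deg ep)%N * mu i2 ep rho * mu z1 i1 pi)
   * ((\sum_j1 eps j1 * m pi ep j1) * (\sum_j2 u j2 * m rho j2 z2))).
  rewrite sw3; apply: eq_bigr => pi _; rewrite sw3; apply: eq_bigr => ep _; rewrite sw3.
  apply: eq_bigr => rho _; rewrite big_distrlr /= mulr_sumr; apply: eq_bigr => j1 _.
  by rewrite mulr_sumr.
under eq_bigr => pi _ do under eq_bigr => ep _ do under eq_bigr => rho _ do rewrite c_epsm c_um_r.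
transitivity ((\sum_pi eps pi * mu z1 i1 pi) * (\sum_ep eps ep * \sum_rho dlt rho z2 * mu i2 ep rho)).
  rewrite mulr_suml; apply: eq_bigr => pi _; rewrite mulr_sumr; apply: eq_bigr => ep _.
  rewrite !mulr_sumr; apply: eq_bigr => rho _.
  have [->|/eps_deg ->] := eqVneq (eps pi) 0; first by rewrite !(mul0r, mulr0).
  have [->|/eps_deg ->] := eqVneq (eps ep) 0; first by rewrite !(mul0r, mulr0).
  rewrite !(mulnF, mulFn) sgF; ring.
rewrite c_epsmu_r; under eq_bigr => ep _ do rewrite sum_dltl.
by rewrite c_epsmu_l dltC.
Qed.

Ltac kill_eps x := have [->|/eps_deg ->] := eqVneq (eps x) 0; first by rewrite !(mul0r, mulr0).
Ltac kill_u x := have [->|/u_deg ->] := eqVneq (u x) 0; first by rewrite !(mul0r, mulr0).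
Ltac sgsimp := rewrite ?(mulnF, mulFn, addnF, addFn, mulnT, mulTn, addn0, add0n) ?sgF ?sg0.

Lemma HA_one_l y1 y2 z1 z2 :
  \sum_x1 \sum_x2 eps x1 * u x2 * HA_c deg m mu (x1, x2) (y1, y2) (z1, z2)
  = dlt y1 z1 * dlt y2 z2.
Proof.
rewrite /HA_c /=.
transitivity (\sum_x1 \sum_x2 \sum_pi \sum_ep \sum_rho
   (sg (deg pi * deg ep + deg ep)%N * m pi ep y1 * m rho y2 z2)
   * ((eps x1 * mu z1 x1 pi) * (u x2 * mu x2 ep rho))).
  apply: eq_bigr => x1 _; apply: eq_bigr => x2 _; rewrite mulr_sumr.
  apply: eq_bigr => pi _; rewrite mulr_sumr; apply: eq_bigr => ep _; rewrite mulr_sumr.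
  apply: eq_bigr => rho _.
  kill_eps x1; kill_u x2; sgsimp; ring.
transitivity (\sum_pi \sum_ep \sum_rho (sg (deg pi * deg ep + deg ep)%N * m pi ep y1 * m rho y2 z2)
   * ((\sum_x1 eps x1 * mu z1 x1 pi) * (\sum_x2 u x2 * mu x2 ep rho))).
  rewrite sw3; apply: eq_bigr => pi _; rewrite sw3; apply: eq_bigr => ep _; rewrite sw3.
  apply: eq_bigr => rho _; rewrite big_distrlr /= mulr_sumr; apply: eq_bigr => x1 _.
  by rewrite mulr_sumr.
under eq_bigr => pi _ do under eq_bigr => ep _ do under eq_bigr => rho _ do rewrite c_epsmu_l c_umu.
transitivity (\sum_pi dlt z1 pi * ((\sum_ep u ep * m pi ep y1) * (\sum_rho u rho * m rho y2 z2))).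
  apply: eq_bigr => pi _; rewrite big_distrlr /= mulr_sumr; apply: eq_bigr => ep _.
  rewrite mulr_sumr; apply: eq_bigr => rho _.
  kill_u ep; sgsimp; ring.
under eq_bigr => pi _ do rewrite c_um_r c_um_l.
by rewrite sum_dltr dltC.
Qed.

Lemma HA_lolo al be z1 z2 :
  \sum_x1 \sum_y1 eps x1 * eps y1 * HA_c deg m mu (x1, al) (y1, be) (z1, z2)
  = eps z1 * m al be z2.
Proof.
rewrite /HA_c /=.
transitivity (\sum_x1 \sum_y1 \sum_pi \sum_ep \sum_rho
   (sg (deg pi * deg ep + deg ep)%N * m rho be z2 * mu al ep rho)
   * ((eps x1 * mu z1 x1 pi) * (eps y1 * m pi ep y1))).
  apply: eq_bigr => x1 _; apply: eq_bigr => y1 _; rewrite mulr_sumr.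
  apply: eq_bigr => pi _; rewrite mulr_sumr; apply: eq_bigr => ep _; rewrite mulr_sumr.
  apply: eq_bigr => rho _.
  kill_eps x1; kill_eps y1; sgsimp; ring.
transitivity (\sum_pi \sum_ep \sum_rho (sg (deg pi * deg ep + deg ep)%N * m rho be z2 * mu al ep rho)
   * ((\sum_x1 eps x1 * mu z1 x1 pi) * (\sum_y1 eps y1 * m pi ep y1))).
  rewrite sw3; apply: eq_bigr => pi _; rewrite sw3; apply: eq_bigr => ep _; rewrite sw3.
  apply: eq_bigr => rho _; rewrite big_distrlr /= mulr_sumr; apply: eq_bigr => x1 _.
  by rewrite mulr_sumr.
under eq_bigr => pi _ do under eq_bigr => ep _ do under eq_bigr => rho _ do rewrite c_epsmu_l c_epsm.
transitivity ((\sum_pi dlt z1 pi * eps pi) * (\sum_ep \sum_rho eps ep * mu al ep rho * m rho be z2)).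
  rewrite mulr_suml; apply: eq_bigr => pi _; rewrite mulr_sumr; apply: eq_bigr => ep _.
  rewrite mulr_sumr; apply: eq_bigr => rho _.
  kill_eps pi; kill_eps ep; sgsimp; ring.
rewrite sum_dltr exchange_big /=; under eq_bigr => rho _ do rewrite -mulr_suml c_epsmu_l.
by rewrite sum_dltr.
Qed.

Lemma HA_upup be de z1 z2 :
  \sum_x2 \sum_y2 u x2 * u y2 * HA_c deg m mu (be, x2) (de, y2) (z1, z2)
  = sg (deg be * deg de)%N * mu z1 be de * u z2.
Proof.
rewrite /HA_c /=.
transitivity (\sum_x2 \sum_y2 \sum_pi \sum_ep \sum_rho
   (sg (deg pi * deg ep + deg pi * deg be + deg ep)%N * m pi ep de * mu z1 be pi)
   * ((u x2 * mu x2 ep rho) * (u y2 * m rho y2 z2))).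
  apply: eq_bigr => x2 _; apply: eq_bigr => y2 _; rewrite mulr_sumr.
  apply: eq_bigr => pi _; rewrite mulr_sumr; apply: eq_bigr => ep _; rewrite mulr_sumr.
  apply: eq_bigr => rho _.
  kill_u x2; sgsimp; ring.
transitivity (\sum_pi \sum_ep \sum_rho (sg (deg pi * deg ep + deg pi * deg be + deg ep)%N * m pi ep de * mu z1 be pi)
   * ((\sum_x2 u x2 * mu x2 ep rho) * (\sum_y2 u y2 * m rho y2 z2))).
  rewrite sw3; apply: eq_bigr => pi _; rewrite sw3; apply: eq_bigr => ep _; rewrite sw3.
  apply: eq_bigr => rho _; rewrite big_distrlr /= mulr_sumr; apply: eq_bigr => x1 _.
  by rewrite mulr_sumr.
under eq_bigr => pi _ do under eq_bigr => ep _ do under eq_bigr => rho _ do rewrite c_umu c_um_r.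
transitivity (\sum_pi (sg (deg pi * deg be)%N * mu z1 be pi) * ((\sum_ep u ep * m pi ep de) * (\sum_rho dlt rho z2 * u rho))).
  apply: eq_bigr => pi _; rewrite big_distrlr /= mulr_sumr; apply: eq_bigr => ep _.
  rewrite mulr_sumr; apply: eq_bigr => rho _.
  kill_u ep; sgsimp; ring.
under eq_bigr => pi _ do rewrite c_um_r sum_dltl.
transitivity (\sum_pi dlt pi de * (sg (deg pi * deg be)%N * mu z1 be pi * u z2)).
  by apply: eq_bigr => pi _; ring.
by rewrite sum_dltl mulnC.
Qed.

Lemma HAs_one_r x1 x2 z1 z2 :
  \sum_y1 \sum_y2 u y1 * eps y2 * HAs_c deg m mu (x1, x2) (y1, y2) (z1, z2)
  = dlt x1 z1 * dlt x2 z2.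
Proof.
rewrite /HAs_c /=.
transitivity (\sum_y1 \sum_y2 \sum_rho \sum_ep \sum_pi
   (sg (deg rho * deg pi + deg rho * deg ep)%N * m ep pi x2 * m x1 rho z1)
   * ((u y1 * mu y1 rho ep) * (eps y2 * mu z2 pi y2))).
  apply: eq_bigr => y1 _; apply: eq_bigr => y2 _; rewrite mulr_sumr.
  apply: eq_bigr => rho _; rewrite mulr_sumr; apply: eq_bigr => ep _; rewrite mulr_sumr.
  apply: eq_bigr => pi _.
  kill_eps y2; sgsimp; ring.
transitivity (\sum_rho \sum_ep \sum_pi (sg (deg rho * deg pi + deg rho * deg ep)%N * m ep pi x2 * m x1 rho z1)
   * ((\sum_y1 u y1 * mu y1 rho ep) * (\sum_y2 eps y2 * mu z2 pi y2))).
  rewrite sw3; apply: eq_bigr => rho _; rewrite sw3; apply: eq_bigr => ep _; rewrite sw3.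
  apply: eq_bigr => pi _; rewrite big_distrlr /= mulr_sumr; apply: eq_bigr => y1 _.
  by rewrite mulr_sumr.
under eq_bigr => rho _ do under eq_bigr => ep _ do under eq_bigr => pi _ do rewrite c_umu c_epsmu_r.
transitivity ((\sum_rho u rho * m x1 rho z1) * (\sum_ep \sum_pi u ep * m ep pi x2 * dlt z2 pi)).
  rewrite mulr_suml; apply: eq_bigr => rho _; rewrite mulr_sumr; apply: eq_bigr => ep _.
  rewrite mulr_sumr; apply: eq_bigr => pi _.
  kill_u rho; sgsimp; ring.
rewrite c_um_r exchange_big /=; under eq_bigr => pi _ do rewrite -mulr_suml c_um_l.
by rewrite (eq_bigr (fun pi => dlt pi x2 * dlt z2 pi)) // sum_dltl [dlt z2 x2]dltC.
Qed.

Lemma HAs_one_l y1 y2 z1 z2 :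
  \sum_x1 \sum_x2 u x1 * eps x2 * HAs_c deg m mu (x1, x2) (y1, y2) (z1, z2)
  = dlt y1 z1 * dlt y2 z2.
Proof.
rewrite /HAs_c /=.
transitivity (\sum_x1 \sum_x2 \sum_rho \sum_ep \sum_pi
   (sg (deg rho * deg pi + deg rho * deg ep + deg pi * deg y2)%N * mu y1 rho ep * mu z2 pi y2)
   * ((u x1 * m x1 rho z1) * (eps x2 * m ep pi x2))).
  apply: eq_bigr => x1 _; apply: eq_bigr => x2 _; rewrite mulr_sumr.
  apply: eq_bigr => rho _; rewrite mulr_sumr; apply: eq_bigr => ep _; rewrite mulr_sumr.
  apply: eq_bigr => pi _; ring.
transitivity (\sum_rho \sum_ep \sum_pi (sg (deg rho * deg pi + deg rho * deg ep + deg pi * deg y2)%N * mu y1 rho ep * mu z2 pi y2)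
   * ((\sum_x1 u x1 * m x1 rho z1) * (\sum_x2 eps x2 * m ep pi x2))).
  rewrite sw3; apply: eq_bigr => rho _; rewrite sw3; apply: eq_bigr => ep _; rewrite sw3.
  apply: eq_bigr => pi _; rewrite big_distrlr /= mulr_sumr; apply: eq_bigr => y1' _.
  by rewrite mulr_sumr.
under eq_bigr => rho _ do under eq_bigr => ep _ do under eq_bigr => pi _ do rewrite c_um_l c_epsm.
transitivity (\sum_rho dlt rho z1 * ((\sum_ep eps ep * mu y1 rho ep) * (\sum_pi eps pi * mu z2 pi y2))).
  apply: eq_bigr => rho _; rewrite big_distrlr /= mulr_sumr; apply: eq_bigr => ep _.
  rewrite mulr_sumr; apply: eq_bigr => pi _.
  kill_eps ep; kill_eps pi; sgsimp; ring.
under eq_bigr => rho _ do rewrite c_epsmu_r c_epsmu_l.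
by rewrite sum_dltl [dlt z2 y2]dltC.
Qed.

Lemma HAs_lolo ga de z1 z2 :
  \sum_x2 \sum_y2 eps x2 * eps y2 * HAs_c deg m mu (ga, x2) (de, y2) (z1, z2)
  = m ga de z1 * eps z2.
Proof.
rewrite /HAs_c /=.
transitivity (\sum_x2 \sum_y2 \sum_rho \sum_ep \sum_pi
   (sg (deg rho * deg pi + deg rho * deg ep)%N * mu de rho ep * m ga rho z1)
   * ((eps x2 * m ep pi x2) * (eps y2 * mu z2 pi y2))).
  apply: eq_bigr => x2 _; apply: eq_bigr => y2 _; rewrite mulr_sumr.
  apply: eq_bigr => rho _; rewrite mulr_sumr; apply: eq_bigr => ep _; rewrite mulr_sumr.
  apply: eq_bigr => pi _.
  kill_eps y2; sgsimp; ring.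
transitivity (\sum_rho \sum_ep \sum_pi (sg (deg rho * deg pi + deg rho * deg ep)%N * mu de rho ep * m ga rho z1)
   * ((\sum_x2 eps x2 * m ep pi x2) * (\sum_y2 eps y2 * mu z2 pi y2))).
  rewrite sw3; apply: eq_bigr => rho _; rewrite sw3; apply: eq_bigr => ep _; rewrite sw3.
  apply: eq_bigr => pi _; rewrite big_distrlr /= mulr_sumr; apply: eq_bigr => y1' _.
  by rewrite mulr_sumr.
under eq_bigr => rho _ do under eq_bigr => ep _ do under eq_bigr => pi _ do rewrite c_epsm c_epsmu_r.
transitivity (\sum_rho m ga rho z1 * ((\sum_ep eps ep * mu de rho ep) * (\sum_pi dlt z2 pi * eps pi))).
  apply: eq_bigr => rho _; rewrite big_distrlr /= mulr_sumr; apply: eq_bigr => ep _.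
  rewrite mulr_sumr; apply: eq_bigr => pi _.
  kill_eps ep; kill_eps pi; sgsimp; ring.
under eq_bigr => rho _ do rewrite c_epsmu_r sum_dltr mulrCA.
by rewrite sum_dltr.
Qed.

Lemma HAs_upup al ga z1 z2 :
  \sum_x1 \sum_y1 u x1 * u y1 * HAs_c deg m mu (x1, al) (y1, ga) (z1, z2)
  = sg (deg al * deg ga)%N * u z1 * mu z2 al ga.
Proof.
rewrite /HAs_c /=.
transitivity (\sum_x1 \sum_y1 \sum_rho \sum_ep \sum_pi
   (sg (deg rho * deg pi + deg rho * deg ep + deg pi * deg ga)%N * mu z2 pi ga * m ep pi al)
   * ((u x1 * m x1 rho z1) * (u y1 * mu y1 rho ep))).
  apply: eq_bigr => x1 _; apply: eq_bigr => y1 _; rewrite mulr_sumr.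
  apply: eq_bigr => rho _; rewrite mulr_sumr; apply: eq_bigr => ep _; rewrite mulr_sumr.
  apply: eq_bigr => pi _; ring.
transitivity (\sum_rho \sum_ep \sum_pi (sg (deg rho * deg pi + deg rho * deg ep + deg pi * deg ga)%N * mu z2 pi ga * m ep pi al)
   * ((\sum_x1 u x1 * m x1 rho z1) * (\sum_y1 u y1 * mu y1 rho ep))).
  rewrite sw3; apply: eq_bigr => rho _; rewrite sw3; apply: eq_bigr => ep _; rewrite sw3.
  apply: eq_bigr => pi _; rewrite big_distrlr /= mulr_sumr; apply: eq_bigr => y1' _.
  by rewrite mulr_sumr.
under eq_bigr => rho _ do under eq_bigr => ep _ do under eq_bigr => pi _ do rewrite c_um_l c_umu.
transitivity ((\sum_rho dlt rho z1 * u rho) * (\sum_ep \sum_pi u ep * m ep pi al * (sg (deg pi * deg ga)%N * mu z2 pi ga))).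
  rewrite mulr_suml; apply: eq_bigr => rho _; rewrite mulr_sumr; apply: eq_bigr => ep _.
  rewrite mulr_sumr; apply: eq_bigr => pi _.
  kill_u rho; sgsimp; ring.
rewrite sum_dltl exchange_big /=; under eq_bigr => pi _ do rewrite -mulr_suml c_um_l.
rewrite sum_dltl; ring.
Qed.

Lemma gsw3 (T1 T2 T3 : finType) (f : T1 -> T2 -> T3 -> F) :
  \sum_a \sum_b \sum_c f a b c = \sum_c \sum_a \sum_b f a b c.
Proof. under eq_bigr => a _ do rewrite exchange_big. by rewrite exchange_big. Qed.
Lemma gsw4 (T1 T2 T3 T4 : finType) (f : T1 -> T2 -> T3 -> T4 -> F) :
  \sum_a \sum_b \sum_c \sum_d f a b c d = \sum_d \sum_a \sum_b \sum_c f a b c d.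
Proof. under eq_bigr => a _ do rewrite gsw3. by rewrite exchange_big. Qed.

Definition BB := B I.
Definition HAm (x y : BB -> F) : BB -> F :=
  fun k => \sum_(i : BB) \sum_(j : BB) x i * y j * HA_c deg m mu i j k.
Definition HAsm (x y : BB -> F) : BB -> F :=
  fun k => \sum_(i : BB) \sum_(j : BB) x i * y j * HAs_c deg m mu i j k.
Definition homog (p : bool) (x : BB -> F) := forall k, x k != 0 -> odd (bdeg deg k) = p.

Lemma sg_odd n n' : odd n = odd n' -> sg n = sg n' :> F.
Proof. by move=> h; rewrite /sg -signr_odd h signr_odd. Qed.

Lemma prod4 (S : F) (A B C D : BB -> BB -> F) :
  S * ((\sum_i \sum_j A i j) * (\sum_i \sum_j B i j) * (\sum_i \sum_j C i j) * (\sum_i \sum_j D i j))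
  = \sum_i1 \sum_j1 \sum_i2 \sum_j2 \sum_i3 \sum_j3 \sum_i4 \sum_j4
      S * (A i1 j1 * B i2 j2 * C i3 j3 * D i4 j4).
Proof.
have e1 : forall (G : BB -> BB -> F) x, (\sum_i \sum_j G i j) * x = \sum_i \sum_j G i j * x.
  move=> G x; rewrite mulr_suml; apply: eq_bigr => i _; by rewrite mulr_suml.
transitivity ((\sum_i \sum_j A i j) * (S * ((\sum_i \sum_j B i j) * (\sum_i \sum_j C i j) * (\sum_i \sum_j D i j)))).
  by ring.
rewrite e1; apply: eq_bigr => i1 _; apply: eq_bigr => j1 _.
transitivity ((\sum_i \sum_j B i j) * (S * A i1 j1 * ((\sum_i \sum_j C i j) * (\sum_i \sum_j D i j)))).
  by ring.
rewrite e1; apply: eq_bigr => i2 _; apply: eq_bigr => j2 _.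
transitivity ((\sum_i \sum_j C i j) * (S * A i1 j1 * B i2 j2 * (\sum_i \sum_j D i j))).
  by ring.
rewrite e1; apply: eq_bigr => i3 _; apply: eq_bigr => j3 _.
transitivity ((\sum_i \sum_j D i j) * (S * A i1 j1 * B i2 j2 * C i3 j3)).
  by ring.
rewrite e1; apply: eq_bigr => i4 _; apply: eq_bigr => j4 _.
by ring.
Qed.

Lemma mul4_tens (x1 x2 x3 x4 y1 y2 y3 y4 : BB -> F) (p2 p3 p4 q1 q2 q3 : bool) :
  homog p2 x2 -> homog p3 x3 -> homog p4 x4 -> homog q1 y1 -> homog q2 y2 -> homog q3 y3 ->
  forall k1 k2 k3 k4,
  mul4 deg m mu (tens4 x1 x2 x3 x4) (tens4 y1 y2 y3 y4) k1 k2 k3 k4 =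
  sg (p2 * q1 + p3 * (q1 + q2) + p4 * (q1 + q2 + q3))%N
  * tens4 (HAm x1 y1) (HAsm x2 y2) (HAm x3 y3) (HAsm x4 y4) k1 k2 k3 k4.
Proof.
move=> h2 h3 h4 g1 g2 g3 k1 k2 k3 k4.
set S := sg _.
rewrite /mul4 /tens4 /HAm /HAsm prod4.
transitivity (\sum_i1 \sum_i2 \sum_i3 \sum_i4 \sum_j1 \sum_j2 \sum_j3 \sum_j4
   S * ((x1 i1 * y1 j1 * HA_c deg m mu i1 j1 k1) * (x2 i2 * y2 j2 * HAs_c deg m mu i2 j2 k2)
      * (x3 i3 * y3 j3 * HA_c deg m mu i3 j3 k3) * (x4 i4 * y4 j4 * HAs_c deg m mu i4 j4 k4))).
  apply: eq_bigr => i1 _; apply: eq_bigr => i2 _; apply: eq_bigr => i3 _; apply: eq_bigr => i4 _.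
  apply: eq_bigr => j1 _; apply: eq_bigr => j2 _; apply: eq_bigr => j3 _; apply: eq_bigr => j4 _.
  have [->|/h2 e2] := eqVneq (x2 i2) 0; first by rewrite !(mul0r, mulr0).
  have [->|/h3 e3] := eqVneq (x3 i3) 0; first by rewrite !(mul0r, mulr0).
  have [->|/h4 e4] := eqVneq (x4 i4) 0; first by rewrite !(mul0r, mulr0).
  have [->|/g1 f1] := eqVneq (y1 j1) 0; first by rewrite !(mul0r, mulr0).
  have [->|/g2 f2] := eqVneq (y2 j2) 0; first by rewrite !(mul0r, mulr0).
  have [->|/g3 f3] := eqVneq (y3 j3) 0; first by rewrite !(mul0r, mulr0).
  have -> : sg (bdeg deg i2 * bdeg deg j1 + bdeg deg i3 * (bdeg deg j1 + bdeg deg j2)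
            + bdeg deg i4 * (bdeg deg j1 + bdeg deg j2 + bdeg deg j3))%N = S :> F.
    apply: sg_odd; move: e2 e3 e4 f1 f2 f3.
    move: (bdeg deg i2) (bdeg deg i3) (bdeg deg i4) (bdeg deg j1) (bdeg deg j2) (bdeg deg j3).
    move=> d2 d3 d4 c1 c2 c3 e2 e3 e4 f1 f2 f3.
    by rewrite !oddD !oddM !oddD e2 e3 e4 f1 f2 f3 !oddb.
  ring.
apply: eq_bigr => i1 _; rewrite gsw4; apply: eq_bigr => j1 _.
apply: eq_bigr => i2 _; rewrite gsw3; apply: eq_bigr => j2 _.
apply: eq_bigr => i3 _; rewrite exchange_big; apply: eq_bigr => j3 _.
by [].
Qed.

Ltac d8 := apply: eq_bigr => ? _; apply: eq_bigr => ? _; apply: eq_bigr => ? _; apply: eq_bigr => ? _;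
           apply: eq_bigr => ? _; apply: eq_bigr => ? _; apply: eq_bigr => ? _; apply: eq_bigr => ? _.
Ltac x8 := do 8 (rewrite [RHS]exchange_big; apply: eq_bigr => ? _).

Lemma mul4_ext (X X' Y Y' : T4 F I) :
  (forall i1 i2 i3 i4, X i1 i2 i3 i4 = X' i1 i2 i3 i4) ->
  (forall i1 i2 i3 i4, Y i1 i2 i3 i4 = Y' i1 i2 i3 i4) ->
  forall k1 k2 k3 k4, mul4 deg m mu X Y k1 k2 k3 k4 = mul4 deg m mu X' Y' k1 k2 k3 k4.
Proof. move=> hX hY k1 k2 k3 k4; rewrite /mul4; d8; by rewrite hX hY. Qed.

Lemma mul4_suml (J : finType) (X : J -> T4 F I) (Y : T4 F I) k1 k2 k3 k4 :
  mul4 deg m mu (fun k1 k2 k3 k4 => \sum_j X j k1 k2 k3 k4) Y k1 k2 k3 k4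
  = \sum_j mul4 deg m mu (X j) Y k1 k2 k3 k4.
Proof. rewrite /mul4; x8; by rewrite /= !mulr_suml. Qed.

Lemma mul4_sumr (J : finType) (X : T4 F I) (Y : J -> T4 F I) k1 k2 k3 k4 :
  mul4 deg m mu X (fun k1 k2 k3 k4 => \sum_j Y j k1 k2 k3 k4) k1 k2 k3 k4
  = \sum_j mul4 deg m mu X (Y j) k1 k2 k3 k4.
Proof. rewrite /mul4; x8; by rewrite /= [X _ _ _ _ * _]mulr_sumr !mulr_suml. Qed.

Lemma mul4_scalel (c : F) (X Y : T4 F I) k1 k2 k3 k4 :
  mul4 deg m mu (fun k1 k2 k3 k4 => c * X k1 k2 k3 k4) Y k1 k2 k3 k4
  = c * mul4 deg m mu X Y k1 k2 k3 k4.
Proof.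
rewrite /mul4.
do 8 (rewrite [RHS]mulr_sumr; apply: eq_bigr => ? _).
by rewrite !mulrA.
Qed.

Lemma mul4_scaler (c : F) (X Y : T4 F I) k1 k2 k3 k4 :
  mul4 deg m mu X (fun k1 k2 k3 k4 => c * Y k1 k2 k3 k4) k1 k2 k3 k4
  = c * mul4 deg m mu X Y k1 k2 k3 k4.
Proof.
rewrite /mul4.
do 8 (rewrite [RHS]mulr_sumr; apply: eq_bigr => ? _).
ring.
Qed.

Lemma sumB2 (G : BB -> BB -> F) :
  \sum_(i : BB) \sum_(j : BB) G i j = \sum_i1 \sum_i2 \sum_j1 \sum_j2 G (i1, i2) (j1, j2).
Proof.
rewrite sumB; apply: eq_bigr => i1 _; apply: eq_bigr => i2 _; exact: sumB.
Qed.

Lemma P_one_r x k : HAm x (HA_one u eps) k = x k.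
Proof.
case: k => z1 z2; rewrite /HAm sumB.
transitivity (\sum_i1 \sum_i2 x (i1, i2) * (dlt i1 z1 * dlt i2 z2)).
  apply: eq_bigr => i1 _; apply: eq_bigr => i2 _.
  rewrite sumB -HA_one_r mulr_sumr; apply: eq_bigr => j1 _; rewrite mulr_sumr.
  apply: eq_bigr => j2 _; rewrite /HA_one /=; ring.
transitivity (\sum_i1 dlt i1 z1 * \sum_i2 dlt i2 z2 * x (i1, i2)).
  apply: eq_bigr => i1 _; rewrite mulr_sumr; apply: eq_bigr => i2 _; ring.
under eq_bigr => i1 _ do rewrite sum_dltl.
by rewrite sum_dltl.
Qed.

Lemma P_one_l x k : HAm (HA_one u eps) x k = x k.
Proof.
case: k => z1 z2; rewrite /HAm exchange_big sumB /=.
transitivity (\sum_i1 \sum_i2 x (i1, i2) * (dlt i1 z1 * dlt i2 z2)).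
  apply: eq_bigr => i1 _; apply: eq_bigr => i2 _.
  rewrite sumB -HA_one_l mulr_sumr; apply: eq_bigr => j1 _; rewrite mulr_sumr.
  apply: eq_bigr => j2 _; rewrite /HA_one /=; ring.
transitivity (\sum_i1 dlt i1 z1 * \sum_i2 dlt i2 z2 * x (i1, i2)).
  apply: eq_bigr => i1 _; rewrite mulr_sumr; apply: eq_bigr => i2 _; ring.
under eq_bigr => i1 _ do rewrite sum_dltl.
by rewrite sum_dltl.
Qed.

Lemma Ps_one_r x k : HAsm x (HAs_one u eps) k = x k.
Proof.
case: k => z1 z2; rewrite /HAsm sumB.
transitivity (\sum_i1 \sum_i2 x (i1, i2) * (dlt i1 z1 * dlt i2 z2)).
  apply: eq_bigr => i1 _; apply: eq_bigr => i2 _.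
  rewrite sumB -HAs_one_r mulr_sumr; apply: eq_bigr => j1 _; rewrite mulr_sumr.
  apply: eq_bigr => j2 _; rewrite /HAs_one /=; ring.
transitivity (\sum_i1 dlt i1 z1 * \sum_i2 dlt i2 z2 * x (i1, i2)).
  apply: eq_bigr => i1 _; rewrite mulr_sumr; apply: eq_bigr => i2 _; ring.
under eq_bigr => i1 _ do rewrite sum_dltl.
by rewrite sum_dltl.
Qed.

Lemma Ps_one_l x k : HAsm (HAs_one u eps) x k = x k.
Proof.
case: k => z1 z2; rewrite /HAsm exchange_big sumB /=.
transitivity (\sum_i1 \sum_i2 x (i1, i2) * (dlt i1 z1 * dlt i2 z2)).
  apply: eq_bigr => i1 _; apply: eq_bigr => i2 _.
  rewrite sumB -HAs_one_l mulr_sumr; apply: eq_bigr => j1 _; rewrite mulr_sumr.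
  apply: eq_bigr => j2 _; rewrite /HAs_one /=; ring.
transitivity (\sum_i1 dlt i1 z1 * \sum_i2 dlt i2 z2 * x (i1, i2)).
  apply: eq_bigr => i1 _; rewrite mulr_sumr; apply: eq_bigr => i2 _; ring.
under eq_bigr => i1 _ do rewrite sum_dltl.
by rewrite sum_dltl.
Qed.

Definition lolo al be : BB -> F := fun k => eps k.1 * m al be k.2.
Definition upup be de : BB -> F := fun k => sg (deg be * deg de)%N * mu k.1 be de * u k.2.
Definition lolos ga de : BB -> F := fun k => m ga de k.1 * eps k.2.
Definition upups al ga : BB -> F := fun k => sg (deg al * deg ga)%N * u k.1 * mu k.2 al ga.

Lemma P_lolo al be k : HAm (HA_lo eps al) (HA_lo eps be) k = lolo al be k.
Proof.
case: k => z1 z2; rewrite /HAm sumB2 /lolo /= -HA_lolo.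
transitivity (\sum_i1 \sum_i2 dlt i2 al * \sum_j1 \sum_j2 dlt j2 be *
   (eps i1 * eps j1 * HA_c deg m mu (i1, i2) (j1, j2) (z1, z2))).
  apply: eq_bigr => i1 _; apply: eq_bigr => i2 _; rewrite mulr_sumr; apply: eq_bigr => j1 _.
  rewrite !mulr_sumr; apply: eq_bigr => j2 _; rewrite /HA_lo /=; ring.
apply: eq_bigr => i1 _; rewrite sum_dltl; apply: eq_bigr => j1 _.
by rewrite sum_dltl.
Qed.

Lemma Ps_lolo ga de k : HAsm (HAs_lo eps ga) (HAs_lo eps de) k = lolos ga de k.
Proof.
case: k => z1 z2; rewrite /HAsm sumB2 /lolos /= -HAs_lolo.
transitivity (\sum_i1 dlt i1 ga * \sum_j1 dlt j1 de * \sum_i2 \sum_j2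
   (eps i2 * eps j2 * HAs_c deg m mu (i1, i2) (j1, j2) (z1, z2))).
  apply: eq_bigr => i1 _; rewrite mulr_sumr exchange_big /=; apply: eq_bigr => j1 _.
  rewrite !mulr_sumr; apply: eq_bigr => i2 _; rewrite !mulr_sumr; apply: eq_bigr => j2 _.
  rewrite /HAs_lo /=; ring.
by rewrite sum_dltl sum_dltl.
Qed.

Lemma P_upup be de k : HAm (HA_up u be) (HA_up u de) k = upup be de k.
Proof.
case: k => z1 z2; rewrite /HAm sumB2 /upup /= -HA_upup.
transitivity (\sum_i1 dlt i1 be * \sum_j1 dlt j1 de * \sum_i2 \sum_j2
   (u i2 * u j2 * HA_c deg m mu (i1, i2) (j1, j2) (z1, z2))).
  apply: eq_bigr => i1 _; rewrite mulr_sumr exchange_big /=; apply: eq_bigr => j1 _.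
  rewrite !mulr_sumr; apply: eq_bigr => i2 _; rewrite !mulr_sumr; apply: eq_bigr => j2 _.
  rewrite /HA_up /=; ring.
by rewrite sum_dltl sum_dltl.
Qed.

Lemma Ps_upup al ga k : HAsm (HAs_up u al) (HAs_up u ga) k = upups al ga k.
Proof.
case: k => z1 z2; rewrite /HAsm sumB2 /upups /= -HAs_upup.
transitivity (\sum_i1 \sum_i2 dlt i2 al * \sum_j1 \sum_j2 dlt j2 ga *
   (u i1 * u j1 * HAs_c deg m mu (i1, i2) (j1, j2) (z1, z2))).
  apply: eq_bigr => i1 _; apply: eq_bigr => i2 _; rewrite mulr_sumr; apply: eq_bigr => j1 _.
  rewrite !mulr_sumr; apply: eq_bigr => j2 _; rewrite /HAs_up /=; ring.
apply: eq_bigr => i1 _; rewrite sum_dltl; apply: eq_bigr => j1 _.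
by rewrite sum_dltl.
Qed.

Lemma tens4_ext (x1 x2 x3 x4 x1' x2' x3' x4' : BB -> F) :
  (forall k, x1 k = x1' k) -> (forall k, x2 k = x2' k) ->
  (forall k, x3 k = x3' k) -> (forall k, x4 k = x4' k) ->
  forall k1 k2 k3 k4, tens4 x1 x2 x3 x4 k1 k2 k3 k4 = tens4 x1' x2' x3' x4' k1 k2 k3 k4.
Proof. by move=> h1 h2 h3 h4 k1 k2 k3 k4; rewrite /tens4 h1 h2 h3 h4. Qed.

Lemma nz2 (x y : F) : x * y != 0 -> x != 0 /\ y != 0.
Proof. by rewrite mulf_eq0 negb_or => /andP. Qed.
Lemma dlt_nz (i j : I) : dlt i j != 0 :> F -> i = j.
Proof. rewrite /dlt; case: (i =P j) => // _; by rewrite eqxx. Qed.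
Lemma oddbdeg (k : BB) : odd (bdeg deg k) = deg k.1 (+) deg k.2.
Proof. by rewrite /bdeg oddD !oddb. Qed.

Lemma hom_one : homog false (HA_one u eps).
Proof. by case=> k1 k2 /nz2 [/eps_deg h1 /u_deg h2]; rewrite oddbdeg /= h1 h2. Qed.
Lemma hom_s_one : homog false (HAs_one u eps).
Proof. by case=> k1 k2 /nz2 [/u_deg h1 /eps_deg h2]; rewrite oddbdeg /= h1 h2. Qed.
Lemma hom_lo al : homog (deg al) (HA_lo eps al).
Proof. by case=> k1 k2 /nz2 [/eps_deg h1 /dlt_nz /= h2]; rewrite oddbdeg /= h1 h2. Qed.
Lemma hom_up al : homog (deg al) (HA_up u al).
Proof. by case=> k1 k2 /nz2 [/dlt_nz /= h1 /u_deg h2]; rewrite oddbdeg /= h1 h2 addbF. Qed.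
Lemma hom_s_lo al : homog (deg al) (HAs_lo eps al).
Proof. by case=> k1 k2 /nz2 [/dlt_nz /= h1 /eps_deg h2]; rewrite oddbdeg /= h1 h2 addbF. Qed.
Lemma hom_s_up al : homog (deg al) (HAs_up u al).
Proof. by case=> k1 k2 /nz2 [/u_deg h1 /dlt_nz /= h2]; rewrite oddbdeg /= h1 h2. Qed.
Lemma hom_lolo al be : homog (deg al (+) deg be) (lolo al be).
Proof.
case=> k1 k2 /nz2 [/eps_deg h1 h2]; rewrite oddbdeg /= h1.
by rewrite (gh_deg_m HH h2).
Qed.
Lemma hom_upups al ga : homog (deg al (+) deg ga) (upups al ga).
Proof.
case=> k1 k2 /nz2 [/nz2 [_ /u_deg h1] h2]; rewrite oddbdeg /= h1.
by rewrite (gh_deg_mu HH h2).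
Qed.

Lemma step1 (a b' : nat) k1 k2 k3 k4 :
  mul4 deg m mu (Spp14 deg u eps a b') (S13 deg u eps) k1 k2 k3 k4 =
  \sum_al \sum_be sg ((a + b') * deg al)%N * sg (deg be) *
    (sg (false * deg be + false * (deg be + false) + deg al * (deg be + false + deg be))%N *
     tens4 (lolo al be) (HAs_one u eps) (HA_up u be) (HAs_up u al) k1 k2 k3 k4).
Proof.
rewrite /Spp14 /S13 mul4_suml; apply: eq_bigr => al _.
rewrite mul4_scalel mul4_sumr mulr_sumr; apply: eq_bigr => be _.
rewrite mul4_scaler (@mul4_tens _ _ _ _ _ _ _ _ _ _ _ _ _ _ hom_s_one hom_one (@hom_s_up al) (@hom_lo be) hom_s_one (@hom_up be)).
rewrite (tens4_ext (P_lolo al be) (@Ps_one_r _) (@P_one_l _) (@Ps_one_r _)).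
by rewrite mulrA.
Qed.

Lemma step2 (a b' : nat) k1 k2 k3 k4 :
  mul4 deg m mu (mul4 deg m mu (Spp14 deg u eps a b') (S13 deg u eps)) (St24 u eps) k1 k2 k3 k4 =
  \sum_al \sum_be \sum_ga sg ((a + b') * deg al)%N * sg (deg be) *
    sg (false * deg be + false * (deg be + false) + deg al * (deg be + false + deg be))%N *
    (sg (false * false + deg be * (false + deg ga) + deg al * (false + deg ga + false))%N *
     tens4 (lolo al be) (HAs_lo eps ga) (HA_up u be) (upups al ga) k1 k2 k3 k4).
Proof.
rewrite (mul4_ext (step1 a b') (fun _ _ _ _ => erefl)).
rewrite mul4_suml; apply: eq_bigr => al _.
rewrite mul4_suml; apply: eq_bigr => be _.
rewrite mul4_scalel mul4_scalel /St24 mul4_sumr !mulr_sumr; apply: eq_bigr => ga _.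
rewrite (@mul4_tens _ _ _ _ _ _ _ _ _ _ _ _ _ _ hom_s_one (@hom_up be) (@hom_s_up al)
           hom_one (@hom_s_lo ga) hom_one).
rewrite (tens4_ext (@P_one_r _) (@Ps_one_l _) (@P_one_r _) (@Ps_upup al ga)).
by rewrite !mulrA.
Qed.

Lemma step3 (a b' : nat) k1 k2 k3 k4 :
  mul4 deg m mu (mul4 deg m mu (mul4 deg m mu (Spp14 deg u eps a b') (S13 deg u eps)) (St24 u eps))
    (Sp23 deg u eps a b') k1 k2 k3 k4 =
  \sum_al \sum_be \sum_ga \sum_de sg ((a + b') * deg al)%N * sg (deg be) *
    sg (false * deg be + false * (deg be + false) + deg al * (deg be + false + deg be))%N *
    sg (false * false + deg be * (false + deg ga) + deg al * (false + deg ga + false))%N *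
    sg ((a + b' + 1) * deg de)%N *
    (sg (deg ga * false + deg be * (false + deg de) + (deg al (+) deg ga) * (false + deg de + deg de))%N *
     tens4 (lolo al be) (lolos ga de) (upup be de) (upups al ga) k1 k2 k3 k4).
Proof.
rewrite (mul4_ext (step2 a b') (fun _ _ _ _ => erefl)).
rewrite mul4_suml; apply: eq_bigr => al _.
rewrite mul4_suml; apply: eq_bigr => be _.
rewrite mul4_suml; apply: eq_bigr => ga _.
rewrite mul4_scalel mul4_scalel /Sp23 mul4_sumr !mulr_sumr; apply: eq_bigr => de _.
rewrite mul4_scaler.
rewrite (@mul4_tens _ _ _ _ _ _ _ _ _ _ _ _ _ _ (@hom_s_lo ga) (@hom_up be) (@hom_upups al ga)
           hom_one (@hom_s_lo de) (@hom_up de)).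
rewrite (tens4_ext (@P_one_r _) (@Ps_lolo ga de) (@P_upup be de) (@Ps_one_r _)).
by rewrite !mulrA.
Qed.

Lemma sgE n : sg n = (-1) ^+ (odd n) :> F.
Proof. by rewrite /sg signr_odd. Qed.
Lemma signT : (-1) ^+ true = -1 :> F. Proof. by rewrite expr1. Qed.
Lemma signF : (-1) ^+ false = 1 :> F. Proof. by rewrite expr0. Qed.

Lemma sgD n1 n2 : sg (n1 + n2) = sg n1 * sg n2 :> F.
Proof. by rewrite /sg exprD. Qed.

Lemma mainpt (a a' b b' : nat) (Haa' : odd (a + a')) (Hbb' : ~~ odd (b + b')) k1 k2 k3 k4 :
  etaR deg m u mu eps a a' b b' k1 k2 k3 k4 =
  mul4 deg m mu (mul4 deg m mu (mul4 deg m mu (Spp14 deg u eps a b') (S13 deg u eps)) (St24 u eps))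
    (Sp23 deg u eps a b') k1 k2 k3 k4.
Proof.
rewrite step3.
case: k1 => x1 ka; case: k2 => kl x2; case: k3 => kr x3; case: k4 => x4 ks.
rewrite /etaR.
pose E := eps x1 * eps x2 * u x3 * u x4.
pose sgL : F := sg (a * deg ka + b * deg kl)%N * sg (a' * deg kr + b' * deg ks)%N.
transitivity (E * (sgL * \sum_al m ks kr al * mu al ka kl)).
  rewrite !mulr_sumr; apply: eq_bigr => al _.
  transitivity (\sum_be dlt ka be * \sum_ga dlt kl ga * \sum_be' dlt kr be' * \sum_ga' dlt ks ga' *
     (sg (a * deg be + b * deg ga)%N * mu al be ga * (sg (a' * deg be' + b' * deg ga')%N * m ga' be' al)
      * (eps x1 * eps x2 * u x3 * u x4))).
    apply: eq_bigr => be _; rewrite !mulr_sumr; apply: eq_bigr => ga _.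
    rewrite !mulr_sumr; apply: eq_bigr => be' _; rewrite !mulr_sumr; apply: eq_bigr => ga' _.
    rewrite /tens4 /HA_lo /HAs_lo /HA_up /HAs_up /=; ring.
  by rewrite sum_dltr sum_dltr sum_dltr sum_dltr /E /sgL; ring.
rewrite (gh_delta_mul HH ks kr ka kl).
rewrite mulr_sumr mulr_sumr; apply: eq_bigr => a1 _.
rewrite [RHS]exchange_big /=.
rewrite mulr_sumr mulr_sumr; apply: eq_bigr => a2 _.
rewrite mulr_sumr mulr_sumr; apply: eq_bigr => b1 _.
rewrite mulr_sumr mulr_sumr; apply: eq_bigr => b2 _.
rewrite /sgL /E /tens4 /lolo /lolos /upup /upups /=.
have [->|hm1] := eqVneq (m a1 b1 ka) 0; first by rewrite !(mul0r, mulr0).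
have [->|hm2] := eqVneq (m a2 b2 kl) 0; first by rewrite !(mul0r, mulr0).
have [->|hm3] := eqVneq (mu kr b1 b2) 0; first by rewrite !(mul0r, mulr0).
have [->|hm4] := eqVneq (mu ks a1 a2) 0; first by rewrite !(mul0r, mulr0).
have hka := gh_deg_m HH hm1; have hkl := gh_deg_m HH hm2.
have hkr := gh_deg_mu HH hm3; have hks := gh_deg_mu HH hm4.
rewrite !sgE !oddD !oddM !oddD !oddb hka hkl hkr hks.
move: Haa' Hbb'; rewrite !oddD.
case: (odd a); case: (odd a'); case: (odd b); case: (odd b');
  case: (deg a1); case: (deg a2); case: (deg b1); case: (deg b2) => //= _ _;
  rewrite ?signT ?signF; ring.
Qed.
End Work.

Theorem mainTheorem5 (F : numClosedFieldType) (I : finType) (deg : I -> bool)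
  (m : I -> I -> I -> F) (u : I -> F) (mu : I -> I -> I -> F) (eps : I -> F)
  (gam gami : I -> I -> F)
  (HH : graded_hopf deg m u mu eps gam gami)
  (a a' b b' : nat) (Haa' : odd (a + a')) (Hbb' : ~~ odd (b + b')) :
  etaR deg m u mu eps a a' b b' =
  mul4 deg m mu
    (mul4 deg m mu
       (mul4 deg m mu (Spp14 deg u eps a b') (S13 deg u eps))
       (St24 u eps))
    (Sp23 deg u eps a b').
Proof.
apply: functional_extensionality => k1; apply: functional_extensionality => k2.
apply: functional_extensionality => k3; apply: functional_extensionality => k4.
exact: (mainpt HH Haa' Hbb').
Qed.
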